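(* Let $M$ be a finitely generated right $R$-module. Then $M$ is injective if and only if $M$ is both weakly injective and quasi-pseudo principally injective.
   Context: All rings are associative with identity and all modules are unitary right $R$-modules; $E(M)$ denotes the injective hull of $M$. $M$ is weakly injective if for every finitely generated submodule $N$ of $E(M)$ there is a submodule $X$ of $E(M)$ with $N\subseteq X\cong M$. A submodule $A$ of $M$ is $M$-cyclic if $A\cong M/L$ for some submodule $L$ of $M$ (equivalently, $A$ is the image of an endomorphism of $M$). $M$ is quasi-pseudo principally injective if for every $M$-cyclic submodule $A$ of $M$, every $R$-monomorphism $A\to M$ extends to an $R$-endomorphism of $M$. *)

(* Defs.v *)
(* Right R-modules are modelled as left modules over the
   converse ring R^c, i.e. M : lmodType R^c, where  a *: m  stands for  m·a. *)
From HB Require Import structures.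
From mathcomp Require Import all_boot all_order all_algebra.
Set Implicit Arguments. Unset Strict Implicit. Unset Printing Implicit Defensive.
Import GRing.Theory.
Local Open Scope ring_scope.

Section ModuleDefs.
Variable R : nzRingType.
Local Notation rmod := (lmodType R^c).

Definition is_submodule (V : rmod) (S : {pred V}) : Prop := submod_closed S.

Definition hom_on (V W : rmod) (A : {pred V}) (f : V -> W) : Prop :=
  forall (a : R^c) (x y : V), x \in A -> y \in A -> f (a *: x + y) = a *: f x + f y.

Definition inj_on (V W : rmod) (A : {pred V}) (f : V -> W) : Prop :=
  forall x y : V, x \in A -> y \in A -> f x = f y -> x = y.

Definition fg_submodule (V : rmod) (A : {pred V}) : Prop :=
  exists s : seq V, all (fun v => v \in A) s /\
    forall x, x \in A -> exists c : 'I_(size s) -> R^c,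
        x = \sum_(i < size s) c i *: s`_i.

Definition fin_gen (M : rmod) : Prop := @fg_submodule M predT.

Definition injective_module (M : rmod) : Prop :=
  forall (N : rmod) (A : {pred N}) (f : N -> M),
    is_submodule A -> hom_on A f ->
    exists g : {linear N -> M}, forall x, x \in A -> g x = f x.

Definition injective_hull (M E : rmod) (iota : {linear M -> E}) : Prop :=
  [/\ injective_module E, injective iota &
      forall S : {pred E}, is_submodule S ->
        (forall x, x \in S -> (exists m, iota m = x) -> x = 0) ->
        forall x, x \in S -> x = 0].

Definition weakly_injective (M : rmod) : Prop :=
  exists (E : rmod) (iota : {linear M -> E}), injective_hull iota /\
    forall N : {pred E}, is_submodule N -> fg_submodule N ->
      exists X : {pred E}, [/\ is_submodule X,
        (forall x, x \in N -> x \in X) &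
        exists h : {linear M -> E}, injective h /\
          forall x, x \in X <-> exists m, h m = x].

Definition M_cyclic (M : rmod) (A : {pred M}) : Prop :=
  exists phi : {linear M -> M}, forall x, x \in A <-> exists m, phi m = x.

Definition qppi (M : rmod) : Prop :=
  forall (A : {pred M}) (f : M -> M),
    is_submodule A -> M_cyclic A -> hom_on A f -> inj_on A f ->
    exists g : {linear M -> M}, forall x, x \in A -> g x = f x.

End ModuleDefs.

(* Main.v *)
Require Import Defs.
From HB Require Import structures.
From mathcomp Require Import all_boot all_order all_algebra.
From Stdlib Require Import ClassicalEpsilon.
Set Implicit Arguments. Unset Strict Implicit. Unset Printing Implicit Defensive.
Import GRing.Theory.
Local Open Scope ring_scope.

Section MkLin.
Variables (R : nzRingType) (U V : lmodType R^c) (f : U -> V).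
Hypothesis Hf : forall (a : R^c) x y, f (a *: x + y) = a *: f x + f y.
Definition mklinf := f.
Lemma mklin_lin : linear mklinf. Proof. by move=> a x y; apply: Hf. Qed.
HB.instance Definition _ := GRing.isLinear.Build R^c U V *:%R mklinf mklin_lin.
Definition mklin : {linear U -> V} := mklinf.
Lemma mklinE x : mklin x = f x. Proof. by []. Qed.
End MkLin.

Lemma ex_lin (R : nzRingType) (U V : lmodType R^c) (f : U -> V) :
  (forall (a : R^c) x y, f (a *: x + y) = a *: f x + f y) ->
  exists g : {linear U -> V}, forall x, g x = f x.
Proof. move=> H; by exists (mklin H). Qed.

Definition asb (P : Prop) : bool := if excluded_middle_informative P then true else false.
Lemma asbP (P : Prop) : asb P <-> P.
Proof. rewrite /asb; case: excluded_middle_informative => //; split => //. Qed.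

Section Key.
Variables (R : nzRingType) (M E : lmodType R^c) (iota : {linear M -> E}).
Hypothesis iota_inj : injective iota.
Hypothesis ess : forall S : {pred E}, is_submodule S ->
        (forall x, x \in S -> (exists m, iota m = x) -> x = 0) ->
        forall x, x \in S -> x = 0.
Hypothesis Mq : qppi M.

Lemma key (X : {pred E}) (h : {linear M -> E}) :
  (forall m, iota m \in X) -> injective h ->
  (forall x, x \in X <-> exists m, h m = x) ->
  forall x, x \in X -> exists m, iota m = x.
Proof.
move=> iX hinj hX.
pose phi0 m := epsilon (inhabits (0 : M)) (fun m' => h m' = iota m).
have phiE m : h (phi0 m) = iota m.
  by apply: (epsilon_spec (inhabits (0:M)) (fun m' => h m' = iota m)); apply/hX.
have phiL : forall (a : R^c) x y, phi0 (a *: x + y) = a *: phi0 x + phi0 y.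
  by move=> a x y; apply: (hinj); rewrite phiE !linearP /= !phiE.
pose phi := mklin phiL.
have phi_inj : injective phi.
  by move=> x y /= /(congr1 h); rewrite !phiE => /iota_inj.
pose A : {pred M} := fun x => asb (exists m, phi m = x).
have AP x : x \in A <-> exists m, phi m = x by rewrite unfold_in; apply: asbP.
pose f x := epsilon (inhabits (0 : M)) (fun m => phi m = x).
have fE x : x \in A -> phi (f x) = x.
  by move=> /AP Hx; apply: (epsilon_spec (inhabits (0:M)) (fun m => phi m = x)).
have fphi m : f (phi m) = m.
  by apply: phi_inj; rewrite fE //; apply/AP; exists m.
have Asub : is_submodule A.
  split; first by apply/AP; exists 0; rewrite linear0.
  move=> a u v /AP [mu <-] /AP [mv <-]; apply/AP; exists (a *: mu + mv).
  by rewrite linearP.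
have [g gE] : exists g : {linear M -> M}, forall x, x \in A -> g x = f x.
  apply: Mq => //.
  - by exists phi => x; apply: AP.
  - move=> a u v /AP [mu <-] /AP [mv <-]; by rewrite -linearP !fphi.
  - by move=> u v Hu Hv Huv; rewrite -(fE u Hu) -(fE v Hv) Huv.
have gphi m : g (phi m) = m by rewrite gE ?fphi //; apply/AP; exists m.
pose S : {pred E} := fun e => asb (exists k, g k = 0 /\ h k = e).
have SP e : e \in S <-> exists k, g k = 0 /\ h k = e by rewrite unfold_in; apply: asbP.
have Ssub : is_submodule S.
  split; first by apply/SP; exists 0; rewrite !linear0.
  move=> a u v /SP [ku [gu <-]] /SP [kv [gv <-]]; apply/SP; exists (a *: ku + kv).
  by rewrite !linearP gu gv /= scaler0 addr0.
have Sz : forall k, g k = 0 -> k = 0.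
  move=> k gk; apply: (hinj); rewrite linear0.
  apply: (ess Ssub); last by apply/SP; exists k.
  move=> e /SP [k' [gk' <-]] [m' hm'].
  have : k' = phi m' by apply: (hinj); rewrite phiE.
  move=> Ek; rewrite -hm'; move: gk'; rewrite Ek gphi => ->; by rewrite linear0.
move=> x /hX [m <-].
exists (g m).
have : m - phi (g m) = 0 by apply: Sz; rewrite linearB /= gphi subrr.
by move/eqP; rewrite subr_eq0 => /eqP ->; rewrite phiE gphi.
Qed.
End Key.

Lemma sub_sum (R : nzRingType) (V : lmodType R^c) (S : {pred V}) n
  (c : 'I_n -> R^c) (v : 'I_n -> V) :
  is_submodule S -> (forall i, v i \in S) -> \sum_(i < n) c i *: v i \in S.
Proof.
move=> [S0 SL] Hv; apply: (big_ind (fun x => x \in S)) => //.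
  by move=> x y Hx Hy; rewrite -[x]scale1r; apply: SL.
by move=> i _; rewrite -[_ *: _]addr0; apply: SL.
Qed.

Definition span (R : nzRingType) (V : lmodType R^c) (t : seq V) : {pred V} :=
  fun y => asb (exists c : 'I_(size t) -> R^c, y = \sum_(i < size t) c i *: t`_i).

Lemma spanP (R : nzRingType) (V : lmodType R^c) (t : seq V) y :
  y \in span t <-> exists c : 'I_(size t) -> R^c, y = \sum_(i < size t) c i *: t`_i.
Proof. by rewrite unfold_in; apply: asbP. Qed.

Lemma span_sub (R : nzRingType) (V : lmodType R^c) (t : seq V) :
  is_submodule (span t).
Proof.
split.
  by apply/spanP; exists (fun _ => 0); rewrite big1 // => i _; rewrite scale0r.
move=> a u v /spanP [cu ->] /spanP [cv ->]; apply/spanP.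
exists (fun i => a * cu i + cv i).
rewrite scaler_sumr -big_split /=; apply: eq_bigr => i _.
by rewrite scalerDl scalerA.
Qed.

Lemma span_mem (R : nzRingType) (V : lmodType R^c) (t : seq V) j :
  (j < size t)%N -> t`_j \in span t.
Proof.
move=> lt; apply/spanP; exists (fun i => ((i : nat) == j)%:R).
rewrite (bigD1 (Ordinal lt)) //= eqxx scale1r big1 ?addr0 // => i.
rewrite -val_eqE /= => /negbTE ->; by rewrite scale0r.
Qed.

Lemma span_fg (R : nzRingType) (V : lmodType R^c) (t : seq V) :
  fg_submodule (span t).
Proof.
exists t; split; last by move=> x /spanP.
by apply/(all_nthP 0) => j lt; apply: span_mem.
Qed.

Theorem proposition2p13 (R : nzRingType) (M : lmodType R^c) :
  fin_gen M ->
  (injective_module M <-> weakly_injective M /\ qppi M).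
Proof.
move=> [s [_ Hs]]; split.
  move=> Minj; split; last first.
    by move=> A f Asub _ Hf _; apply: Minj.
  have idL : forall (a : R^c) (x y : M), id (a *: x + y) = a *: id x + id y by [].
  exists M, (mklin idL); split.
    split; [exact: Minj | by move=> x y | ].
    by move=> S _ HS x Hx; apply: HS => //; exists x.
  move=> N _ _; exists (fun _ : M => true); split => //; exists (mklin idL); split; first by move=> x y.
  by move=> x; split => // _; exists x.
move=> [[E [iota [[Einj iinj ess] W]]] Mq].
have surj : forall e, exists m, iota m = e.
  move=> e; pose t := e :: map iota s.
  have [X [Xsub NX [h [hinj hX]]]] := W (span t) (span_sub t) (span_fg t).
  apply: (key iinj ess Mq (h := h)) => //; last by apply: NX; exact: (span_mem (j := 0)).
  move=> m; apply: NX; have [c ->] := Hs m isT.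
  rewrite linear_sum (eq_bigr (fun i => c i *: iota s`_i)); last by move=> i _; rewrite linearZ.
  apply: (@sub_sum _ _ _ _ c (fun i => iota s`_i) (span_sub t)) => i.
  rewrite -(nth_map 0 0 iota (ltn_ord i)).
  by apply: (span_mem (t := t) (j := i.+1)); rewrite /= size_map ltnS.
move=> N A f Asub Hf.
have HF : hom_on A (fun x => iota (f x)) by move=> a x y Hx Hy; rewrite Hf // linearP.
have [G GE] := Einj N A (fun x => iota (f x)) Asub HF.
pose pinv e := epsilon (inhabits (0 : M)) (fun m => iota m = e).
have pinvE e : iota (pinv e) = e.
  exact: (epsilon_spec (inhabits (0:M)) (fun m => iota m = e) (surj e)).
have gL : forall (a : R^c) x y, pinv (G (a *: x + y)) = a *: pinv (G x) + pinv (G y).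
  by move=> a x y; apply: iinj; rewrite linearP pinvE !linearP /= !pinvE.
exists (mklin gL) => x Hx; apply: iinj; by rewrite mklinE pinvE GE.
Qed.
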